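(* Let $\varepsilon\in(0,3)$. There exists $n_0$ (depending on $\varepsilon$) such that for every $n\ge n_0$ and every real normed space $X$ of dimension $n$ there exists an approximately convex set $A\subseteq X$ with $$\mathcal{H}(A,\operatorname{Co}(A))\ge\log_2 n-\varepsilon\qquad\text{and}\qquad \operatorname{diam}(A)\le \frac{25}{\varepsilon}(\log_2 n)^2\, d(X,\ell_1^n).$$
   Context: A set $A$ is approximately convex if $d(tx+(1-t)y,A)\le1$ for all $x,y\in A$, $t\in[0,1]$, where $d(x,A)=\inf_{a\in A}\|x-a\|$. $\mathcal{H}$ is the Hausdorff distance, $\operatorname{Co}$ the convex hull, $\operatorname{diam}(A)=\sup\{\|x-y\|:x,y\in A\}$. $d(X,Y)=\inf\{\|T\|\|T^{-1}\|: T:X\to Y \text{ a linear isomorphism}\}$ is the Banach–Mazur distance, and $\ell_1^n$ is $\mathbb{R}^n$ with the norm $\sum|a_i|$. *)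

(* Defs.v *)
From HB Require Import structures.
From mathcomp Require Import all_boot all_order all_algebra.
From mathcomp Require Import all_classical all_reals.
From mathcomp Require Import ereal exp.

Set Implicit Arguments.
Unset Strict Implicit.
Unset Printing Implicit Defensive.

Import Order.TTheory GRing.Theory Num.Theory.
Local Open Scope ring_scope.
Local Open Scope classical_set_scope.

Section Defs.
Variables (R : realType) (n : nat).
Local Notation V := 'rV[R]_n.

(* A norm on R^n; every real normed space of dimension n is isometric to
   (R^n, N) for such an N. *)
Definition is_norm (N : V -> R) : Prop :=
  [/\ forall x, N x = 0 -> x = 0,
      forall (a : R) x, N (a *: x) = `|a| * N x &
      forall x y, N (x + y) <= N x + N y].

Definition l1norm (x : V) : R := \sum_(i < n) `|x ord0 i|.

(* d(x, A) = inf_{a in A} ||x - a|| (extended real; +oo for empty A) *)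
Definition dist_set (N : V -> R) (x : V) (A : set V) : \bar R :=
  ereal_inf [set (N (x - a))%:E | a in A].

Definition approx_convex (N : V -> R) (A : set V) : Prop :=
  forall x y t, A x -> A y -> 0 <= t <= 1 ->
    (dist_set N (t *: x + (1 - t) *: y) A <= 1%:E)%E.

Definition hausdorff (N : V -> R) (A B : set V) : \bar R :=
  maxe (ereal_sup [set dist_set N a B | a in A])
       (ereal_sup [set dist_set N b A | b in B]).

Definition conv_hull (A : set V) : set V :=
  [set x | exists k (p : 'I_k -> V) (w : 'I_k -> R),
     [/\ forall i, A (p i), forall i, 0 <= w i, \sum_(i < k) w i = 1 &
         x = \sum_(i < k) w i *: p i]].

Definition diam (N : V -> R) (A : set V) : \bar R :=
  ereal_sup [set (N (x - y))%:E | x in A & y in A].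

Definition opnorm (N1 N2 : V -> R) (T : 'M[R]_n) : \bar R :=
  ereal_sup [set (N2 (x *m T))%:E | x in [set x | N1 x <= 1]].

Definition bm_dist_l1 (N : V -> R) : \bar R :=
  ereal_inf [set (opnorm N l1norm T * opnorm l1norm N (invmx T))%E
            | T in [set T : 'M[R]_n | T \in unitmx]].

End Defs.

Definition log2 (R : realType) (x : R) : R := ln x / ln 2.

(* Main.v *)
Require Import Defs.
From HB Require Import structures.
From mathcomp Require Import all_boot all_order all_algebra.
From mathcomp Require Import all_classical all_reals.
From mathcomp Require Import ereal exp.
From mathcomp Require Import normedtype derive.
From mathcomp Require Import ring lra.
Import Order.TTheory GRing.Theory Num.Theory.
Import numFieldNormedType.Exports.
Local Open Scope ring_scope.
Local Open Scope classical_set_scope.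

Section Scal.
Variable R : realType.
Implicit Types x y k : R.

Lemma ln_le_sub1 x : 0 < x -> ln x <= x - 1.
Proof.
move=> x0; have := @le_ln1Dx R (x - 1).
rewrite addrCA subrr addr0; apply; lra.
Qed.

Lemma negxlnx_le x k : 0 <= x -> 0 < k -> - (x * ln x) <= x * ln k + k^-1 - x.
Proof.
rewrite le_eqVlt => /orP[/eqP<-|x0] k0.
  rewrite !mul0r oppr0; have := invr_gt0 k; rewrite k0; lra.
have kx0 : 0 < k * x by exact: mulr_gt0.
have e1 : ln (k * x) = ln k + ln x by rewrite lnM.
have e2 : ln ((k * x)^-1) = - ln (k * x) by rewrite lnV.
have h : ln ((k * x)^-1) <= (k * x)^-1 - 1 by apply: ln_le_sub1; rewrite invr_gt0.
rewrite e2 e1 in h.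
have h2 : x * (- (ln k + ln x)) <= x * ((k * x)^-1 - 1) by rewrite ler_pM2l.
have e3 : x * ((k * x)^-1 - 1) = k^-1 - x.
  rewrite mulrBr mulr1 invfM mulrCA mulfV ?mulr1 //; exact: lt0r_neq0.
rewrite e3 in h2; lra.
Qed.

Lemma xlnx_mix x y : 0 <= x -> 0 <= y -> x * ln x + y * ln y <= (x + y) * ln (x + y).
Proof.
rewrite le_eqVlt => /orP[/eqP<-|x0]; first by rewrite mul0r !add0r.
rewrite le_eqVlt => /orP[/eqP<-|y0]; first by rewrite mul0r !addr0.
rewrite mulrDl; apply: lerD; rewrite ler_pM2l // ler_ln ?posrE //; lra.
Qed.

Lemma negxlnx_ge x k : 0 < k -> 1 <= ln k -> 0 <= x <= 1 ->
  k^-1 * ln k - `|x - k^-1| * ln k <= - (x * ln x).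
Proof.
move=> k0 lk /andP[x0 x1].
have ki : 0 < k^-1 by rewrite invr_gt0.
have [xk|kx] := leP x k^-1.
  rewrite ler0_norm ?subr_le0 //.
  have -> : k^-1 * ln k - - (x - k^-1) * ln k = x * ln k by ring.
  move: x0; rewrite le_eqVlt => /orP[/eqP<-|x0]; first by rewrite !mul0r oppr0.
  rewrite -mulrN ler_pM2l // -lnV ?posrE // ler_ln ?posrE ?invr_gt0 //.
  by rewrite -[k]invrK lef_pV2 ?posrE ?invr_gt0.
rewrite gtr0_norm ?subr_gt0 //.
have xp : 0 < x by exact: lt_trans ki kx.
have hx : ln x = ln (k * x) - ln k by rewrite lnM ?posrE ?mulr_gt0 //; ring.
have hkx : ln (k * x) <= k * x - 1 by apply: ln_le_sub1; exact: mulr_gt0.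
have lx0 : ln x <= 0 by exact: ln_le0.
have h1 : k^-1 * (- ln x) <= x * (- ln x) by apply: ler_wpM2r; lra.
have h2 : k^-1 * (- ln x) >= k^-1 * ln k - (x - k^-1).
  rewrite hx.
  have -> : k^-1 * ln k - (x - k^-1) = k^-1 * (ln k - (k * x - 1)).
    rewrite mulrBr mulrBr mulrA mulVf ?mul1r ?mulr1 //; exact: lt0r_neq0.
  rewrite ler_pM2l //; lra.
have h3 : (x - k^-1) <= (x - k^-1) * ln k by rewrite ler_peMr // subr_ge0 ltW.
idtac.
nra.
Qed.
End Scal.
Arguments ln_le_sub1 {R}.
Arguments negxlnx_le {R}.
Arguments xlnx_mix {R}.
Arguments negxlnx_ge {R}.

Set Implicit Arguments. Unset Strict Implicit.

Section Ent.
Variable R : realType.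
Variable n : nat.
Implicit Types p q : 'rV[R]_n.

Definition ent p : R := \sum_i - (p ord0 i * ln (p ord0 i)).
Definition distr p := (forall i, 0 <= p ord0 i) /\ \sum_i p ord0 i = 1.

Lemma distr_le1 p i : distr p -> p ord0 i <= 1.
Proof.
move=> [p0 p1]; rewrite -p1 (bigD1 i) //= lerDl; exact: sumr_ge0.
Qed.

Lemma ent_ge0 p : distr p -> 0 <= ent p.
Proof.
move=> dp; apply: sumr_ge0 => i _; rewrite oppr_ge0.
apply: mulr_ge0_le0; [exact: dp.1|exact/ln_le0/distr_le1].
Qed.

Lemma ent_le p : distr p -> (0 < n)%N -> ent p <= ln n%:R.
Proof.
move=> [p0 p1] n0.
have k0 : 0 < n%:R :> R by rewrite ltr0n.
apply: le_trans (_ : \sum_(i < n) (p ord0 i * ln n%:R + n%:R^-1 - p ord0 i) <= _).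
  by apply: ler_sum => i _; apply: negxlnx_le.
rewrite sumrB big_split /= -mulr_suml p1 mul1r sumr_const card_ord.
have -> : (n%:R : R)^-1 *+ n = 1 by rewrite -[LHS]mulr_natr mulVf // lt0r_neq0.
lra.
Qed.

Lemma xlnx_mul s x : 0 <= s -> 0 <= x ->
  (s * x) * ln (s * x) = s * (x * ln x) + x * (s * @ln R s).
Proof.
rewrite le_eqVlt => /orP[/eqP<-|s0]; first by rewrite !mul0r mulr0 addr0.
rewrite le_eqVlt => /orP[/eqP<-|x0]; first by rewrite !(mul0r, mulr0) addr0.
rewrite lnM ?posrE //; ring.
Qed.

Lemma ent_mix p q s : distr p -> distr q -> 0 <= s <= 1 ->
  ent (s *: p + (1 - s) *: q) <= s * ent p + (1 - s) * ent q + ln 2.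
Proof.
move=> [p0 p1] [q0 q1] /andP[s0 s1].
have s1' : 0 <= 1 - s by lra.
apply: le_trans (_ : \sum_i (s * (- (p ord0 i * ln (p ord0 i))) - p ord0 i * (s * ln s)
     + ((1 - s) * (- (q ord0 i * ln (q ord0 i))) - q ord0 i * ((1 - s) * ln (1 - s))))
     <= _).
  apply: ler_sum => i _; rewrite !mxE.
  have := xlnx_mix _ _ (mulr_ge0 s0 (p0 i)) (mulr_ge0 s1' (q0 i)).
  rewrite (@xlnx_mul s (p ord0 i) s0 (p0 i)) (@xlnx_mul (1-s) (q ord0 i) s1' (q0 i)); lra.
rewrite big_split /= !sumrB -!mulr_sumr -!mulr_suml p1 q1 !mul1r.
rewrite /ent.
have h1 := negxlnx_le s 2 s0 (ltr0Sn _ 1).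
have h2 := negxlnx_le (1 - s) 2 s1' (ltr0Sn _ 1).
have e : (2:R)^-1 + 2^-1 = 1 by field.
lra.
Qed.

Lemma ent_near p : distr p -> (0 < n)%N -> 1 <= @ln R n%:R ->
  @ln R n%:R - (\sum_i `|p ord0 i - n%:R^-1|) * @ln R n%:R <= ent p.
Proof.
move=> dp n0 ln1.
have k0 : 0 < n%:R :> R by rewrite ltr0n.
apply: le_trans (_ : \sum_(i < n) (n%:R^-1 * ln n%:R - `|p ord0 i - n%:R^-1| * ln n%:R) <= _); last first.
  apply: ler_sum => i _; apply: negxlnx_ge => //.
  by rewrite dp.1 distr_le1.
rewrite sumrB -mulr_suml sumr_const card_ord.
have -> : (n%:R : R)^-1 *+ n = 1 by rewrite -[LHS]mulr_natr mulVf // lt0r_neq0.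
by rewrite mul1r mulr_suml.
Qed.
End Ent.


Section Norm.
Variable R : realType.
Variable n : nat.
Variable N : 'rV[R]_n -> R.
Hypothesis hN : is_norm N.

Lemma N0 : N 0 = 0.
Proof. by case: hN => _ h _; have := h 0 0; rewrite scale0r normr0 mul0r. Qed.
Lemma NZ a x : N (a *: x) = `|a| * N x.
Proof. by case: hN => _ h _; exact: h. Qed.
Lemma NN x : N (- x) = N x.
Proof. by rewrite -scaleN1r NZ normrN normr1 mul1r. Qed.
Lemma ND x y : N (x + y) <= N x + N y.
Proof. by case: hN => _ _ h; exact: h. Qed.
Lemma N_ge0 x : 0 <= N x.
Proof.
have := ND x (- x); rewrite subrr N0 NN => h.
have : 0 <= N x + N x by [].
lra.
Qed.
Lemma N_eq0 x : N x = 0 -> x = 0.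
Proof. by case: hN => h _ _; exact: h. Qed.
Lemma NB x y : N (x - y) <= N x + N y.
Proof. by rewrite -(NN y); exact: ND. Qed.
Lemma NBl x y : N x - N y <= N (x - y).
Proof.
have := ND (x - y) y; rewrite subrK; lra.
Qed.
End Norm.

Section L1.
Variable R : realType.
Variable n : nat.
Implicit Types x y : 'rV[R]_n.
Lemma l1_ge0 x : 0 <= l1norm x.
Proof. by apply: sumr_ge0 => i _. Qed.
Lemma l1Z a x : l1norm (a *: x) = `|a| * l1norm x.
Proof. by rewrite /l1norm mulr_sumr; apply: eq_bigr => i _; rewrite mxE normrM. Qed.
Lemma l1D x y : l1norm (x + y) <= l1norm x + l1norm y.
Proof. by rewrite /l1norm -big_split; apply: ler_sum => i _; rewrite mxE ler_normD. Qed.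
Lemma l1N x : l1norm (- x) = l1norm x.
Proof. by rewrite -scaleN1r l1Z normrN normr1 mul1r. Qed.
Lemma l1_entry x i : `|x ord0 i| <= l1norm x.
Proof. by rewrite /l1norm (bigD1 i) //= lerDl; apply: sumr_ge0. Qed.
Lemma l1_eq0 x : l1norm x = 0 -> x = 0.
Proof.
move=> h; apply/rowP => i; rewrite mxE.
have := l1_entry x i; rewrite h (ord1 ord0) => e.
by apply/normr0_eq0/le_anti; rewrite e normr_ge0.
Qed.
Lemma l1_norm : is_norm (@l1norm R n).
Proof. split; [exact: l1_eq0|exact: l1Z|exact: l1D]. Qed.
End L1.


Section Psi.
Variable R : realType.
Variable n : nat.
Variable T : 'M[R]_n.
Definition psi (x : 'rV[R]_n) : R := \sum_i (x *m T) ord0 i.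
Lemma psiD x y : psi (x + y) = psi x + psi y.
Proof. by rewrite /psi -big_split; apply: eq_bigr => i _; rewrite mulmxDl mxE. Qed.
Lemma psiZ c x : psi (c *: x) = c * psi x.
Proof. by rewrite /psi mulr_sumr; apply: eq_bigr => i _; rewrite -scalemxAl mxE. Qed.
Lemma psiN x : psi (- x) = - psi x.
Proof. by rewrite -scaleN1r psiZ mulN1r. Qed.
Lemma psiB x y : psi (x - y) = psi x - psi y.
Proof. by rewrite psiD psiN. Qed.
Lemma psi_le x : psi x <= l1norm (x *m T).
Proof. by apply: ler_sum => i _; exact: ler_norm. Qed.
Lemma psi_Ti y : T \in unitmx -> psi (y *m invmx T) = \sum_i y ord0 i.
Proof. by move=> hT; rewrite /psi mulmxKV. Qed.
End Psi.

Lemma ln2_gt0 (R : realType) : 0 < ln (2 : R).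
Proof. by apply: ln_gt0; rewrite ltr1n. Qed.

Lemma ln2_ge (R : realType) : 2^-1 <= ln (2 : R).
Proof.
have h : ln ((2:R)^-1) <= 2^-1 - 1 by apply: ln_le_sub1; rewrite invr_gt0 ltr0n.
rewrite lnV ?posrE ?ltr0n // in h.
have e : (2:R)^-1 - 1 = - 2^-1 by field.
rewrite e in h; lra.
Qed.

Lemma lnn_ge (R : realType) (n : nat) : (4 <= n)%N -> 2 * ln (2:R) <= ln (n%:R : R).
Proof.
move=> hn.
have -> : 2 * ln (2:R) = ln (2 * 2) by rewrite lnM ?posrE ?ltr0n //; ring.
rewrite ler_ln ?posrE ?ltr0n //; last by case: n hn.
have -> : (2 * 2 : R) = 4%:R by rewrite -natrM.
by rewrite ler_nat.
Qed.


Section Construct.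
Variables (R : realType) (n : nat) (N : 'rV[R]_n -> R) (hN : is_norm N).
Variables (eps a b : R) (T : 'M[R]_n).
Hypotheses (heps : 0 < eps < 3) (hn : (4 <= n)%N) (hT : T \in unitmx)
  (ha : 0 < a) (hb : 0 < b)
  (hTa : forall x, l1norm (x *m T) <= a * N x)
  (hTb : forall y, N (y *m invmx T) <= b * l1norm y).
Local Notation Ti := (invmx T).
Let L : R := log2 (n%:R : R).
Variables (S : R) (v : 'rV[R]_n).
Hypotheses (hS : 0 < S) (hK : forall x, psi T x <= S * N x) (hv1 : N v <= 1)
  (hv : S * (1 - eps / (2 * L)) < psi T v).

Let lam : R := 4 * L ^+ 2 * a / eps.
Let H2 (p : 'rV[R]_n) : R := ent p / ln 2.

Let ln2 := ln2_gt0 R.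
Lemma L_ge2 : 2 <= L.
Proof. rewrite /L /log2 ler_pdivlMr //; exact: lnn_ge. Qed.

Lemma lnn_ge1 : 1 <= ln (n%:R : R).
Proof. have := lnn_ge R hn; have := ln2_ge R; lra. Qed.

Lemma n_gt0 : (0 < n)%N.
Proof. by case: n hn. Qed.

Lemma H2_le p : distr p -> H2 p <= L.
Proof. move=> dp; rewrite /H2 /L /log2 ler_pM2r ?invr_gt0 //; exact: ent_le dp n_gt0. Qed.

Lemma H2_ge0 p : distr p -> 0 <= H2 p.
Proof. move=> dp; rewrite /H2 divr_ge0 ?(ltW ln2) //; exact: ent_ge0 dp. Qed.

Definition theA : set 'rV[R]_n :=
  [set z | exists p t, [/\ distr p, H2 p <= t, t <= L & z = lam *: (p *m Ti) + t *: v]].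


Lemma theA_mem (p : 'rV[R]_n) (t : R) : distr p -> H2 p <= t -> t <= L ->
  theA (lam *: (p *m Ti) + t *: v).
Proof. by move=> dp h1 h2; exists p, t. Qed.

Lemma distr_mix (p q : 'rV[R]_n) (s : R) : distr p -> distr q -> 0 <= s <= 1 ->
  distr (s *: p + (1 - s) *: q).
Proof.
move=> [p0 p1] [q0 q1] /andP[s0 s1]; split.
  move=> i; rewrite !mxE; apply: addr_ge0; apply: mulr_ge0 => //; lra.
rewrite (eq_bigr (fun i => s * p ord0 i + (1 - s) * q ord0 i)); last by move=> i _; rewrite !mxE.
rewrite big_split /= -!mulr_sumr p1 q1; ring.
Qed.

Lemma comb_eq (p1 p2 : 'rV[R]_n) (t1 t2 s : R) :
  s *: (lam *: (p1 *m Ti) + t1 *: v) + (1 - s) *: (lam *: (p2 *m Ti) + t2 *: v)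
  = lam *: ((s *: p1 + (1 - s) *: p2) *m Ti) + (s * t1 + (1 - s) * t2) *: v.
Proof.
rewrite mulmxDl -!scalemxAl !scalerDr [(_ + _) *: v]scalerDl !scalerA.
rewrite [s * lam]mulrC [(1 - s) * lam]mulrC.
by rewrite addrACA.
Qed.

Lemma approx : approx_convex N theA.
Proof.
move=> x y s [p1 [t1 [d1 h1 l1 ->]]] [p2 [t2 [d2 h2 l2 ->]]] /andP[s0 s1].
rewrite comb_eq.
set pm := s *: p1 + (1 - s) *: p2.
set tm := s * t1 + (1 - s) * t2.
have dm : distr pm by apply: distr_mix => //; rewrite s0 s1.
have hm : H2 pm <= tm + 1.
  have := ent_mix d1 d2 (ltac:(by rewrite s0 s1) : 0 <= s <= 1).
  rewrite -/pm => e.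
  have : H2 pm <= s * H2 p1 + (1 - s) * H2 p2 + 1.
    rewrite /H2 ler_pdivrMr // !mulrDl -!mulrA !mulVf ?lt0r_neq0 // !mulr1 mul1r.
    move: e; rewrite mul1r; lra.
  have : s * H2 p1 <= s * t1 by rewrite ler_wpM2l.
  have : (1 - s) * H2 p2 <= (1 - s) * t2 by rewrite ler_wpM2l // subr_ge0.
  rewrite /tm; lra.
have tmL : tm <= L.
  rewrite /tm; have : s * t1 <= s * L by rewrite ler_wpM2l.
  have : (1 - s) * t2 <= (1 - s) * L by rewrite ler_wpM2l // subr_ge0.
  lra.
case: (leP (H2 pm) tm) => [le|gt].
  apply: ge_ereal_inf; exists 0%:E; last by rewrite lee_fin.
  exists (lam *: (pm *m Ti) + tm *: v); first exact: theA_mem.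
  by rewrite subrr N0.
apply: ge_ereal_inf; exists (N ((tm - H2 pm) *: v))%:E.
  exists (lam *: (pm *m Ti) + H2 pm *: v).
    by apply: theA_mem => //; exact: H2_le.
  by rewrite opprD addrACA subrr add0r -scalerBl.
rewrite lee_fin NZ // ler0_norm; last by rewrite subr_le0 ltW.
have : 0 <= N v by exact: N_ge0 hN v.
move=> h0; apply: (@le_trans _ _ (1 * N v)); [apply: ler_wpM2r => //; lra | by rewrite mul1r].
Qed.


Lemma delta_entry (i j : 'I_n) : (delta_mx ord0 i : 'rV[R]_n) ord0 j = (j == i)%:R.
Proof. by rewrite mxE eqxx. Qed.

Lemma distr_delta (i : 'I_n) : distr (delta_mx ord0 i : 'rV[R]_n).
Proof.
split; first by move=> j; rewrite delta_entry ler0n.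
rewrite (bigD1 i) //= delta_entry eqxx big1 ?addr0 // => j /negbTE ji.
by rewrite delta_entry ji.
Qed.

Lemma ent_delta (i : 'I_n) : ent (delta_mx ord0 i : 'rV[R]_n) = 0.
Proof.
apply: big1 => j _; rewrite delta_entry.
by case: (j == i); rewrite ?ln1 ?mul0r ?mulr0 oppr0.
Qed.

Definition c0 : 'rV[R]_n := \sum_i n%:R^-1 *: delta_mx ord0 i.

Lemma c0_entry j : c0 ord0 j = n%:R^-1.
Proof.
rewrite /c0 summxE (bigD1 j) //= mxE delta_entry eqxx mulr1 big1 ?addr0 // => i ij.
by rewrite mxE delta_entry eq_sym (negbTE ij) mulr0.
Qed.

Lemma c0_sum : \sum_i c0 ord0 i = 1.
Proof.
under eq_bigr do rewrite c0_entry.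
rewrite sumr_const card_ord -[LHS]mulr_natr mulVf // lt0r_neq0 // ltr0n; exact: n_gt0.
Qed.

Lemma c0_hull : conv_hull theA (lam *: (c0 *m Ti)).
Proof.
exists n, (fun i => lam *: (delta_mx ord0 i *m Ti) + 0 *: v), (fun=> n%:R^-1).
have n0 : 0 < n%:R :> R by rewrite ltr0n n_gt0.
split.
- move=> i; apply: theA_mem; first exact: distr_delta.
    by rewrite /H2 ent_delta mul0r.
  have := L_ge2; lra.
- by move=> i; rewrite invr_ge0 ltW.
- by rewrite sumr_const card_ord -[LHS]mulr_natr mulVf // lt0r_neq0.
rewrite /c0 mulmx_suml scaler_sumr; apply: eq_bigr => i _.
by rewrite scale0r addr0 -scalemxAl !scalerA mulrC.
Qed.

Lemma H2_near p : distr p -> L - l1norm (p - c0) * L <= H2 p.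
Proof.
move=> dp; have := ent_near dp n_gt0 lnn_ge1.
have -> : \sum_i `|p ord0 i - n%:R^-1| = l1norm (p - c0).
  by apply: eq_bigr => i _; rewrite !mxE c0_entry.
move=> h; rewrite /H2 /L /log2 ler_pdivlMr // mulrBl -mulrA mulVf ?lt0r_neq0 //.
by rewrite mulr1 -mulrA divfK ?lt0r_neq0.
Qed.

Lemma dist_lb w : theA w -> L - eps <= N (lam *: (c0 *m Ti) - w).
Proof.
move=> [p [t [dp h1 h2 ->]]].
have L2 := L_ge2.
have e0 : 0 < eps by case/andP: heps.
have e3 : eps < 3 by case/andP: heps.
have t0 : 0 <= t by apply: le_trans h1; exact: H2_ge0.
set r := l1norm (p - c0).
have Nv0 : 0 <= N v by exact: N_ge0 hN v.
case: (leP r (eps / (2 * L))) => hr.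
  have hH := H2_near dp; rewrite -/r in hH.
  have rL : r * L <= eps / 2.
    have -> : eps / 2 = eps / (2 * L) * L.
      by field; rewrite lt0r_neq0 //; lra.
    rewrite ler_wpM2r //; lra.
  have hpsi : psi T (lam *: (p *m Ti) + t *: v - lam *: (c0 *m Ti)) = t * psi T v.
    rewrite psiB psiD !psiZ !psi_Ti // dp.2 c0_sum; ring.
  have := hK (lam *: (p *m Ti) + t *: v - lam *: (c0 *m Ti)).
  rewrite hpsi -(NN hN) opprB => hk.
  have hv' : t * (S * (1 - eps / (2 * L))) <= t * psi T v by rewrite ler_wpM2l // ltW.
  have : t * (1 - eps / (2 * L)) <= N (lam *: (c0 *m Ti) - (lam *: (p *m Ti) + t *: v)).
    rewrite -(@ler_pM2l _ S) //; apply: le_trans hk; apply: le_trans hv'.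
    by rewrite mulrCA.
  have : t * (eps / (2 * L)) <= eps / 2.
    have -> : eps / 2 = L * (eps / (2 * L)) by field; rewrite lt0r_neq0 //; lra.
    rewrite ler_wpM2r // divr_ge0 //; lra.
  move: h1; rewrite mulrBr mulr1; lra.
set X := (c0 - p) *m Ti.
have eX : lam *: (c0 *m Ti) - (lam *: (p *m Ti) + t *: v) = lam *: X - t *: v.
  by rewrite /X mulmxBl scalerBr opprD addrA.
rewrite eX; apply: le_trans (NBl hN _ _).
rewrite !NZ // (gtr0_norm (_ : 0 < lam)); last first.
  have Lp : 0 < L by lra.
  by rewrite /lam divr_gt0 // mulr_gt0 // mulr_gt0 // exprn_gt0.
rewrite ger0_norm //.
have hX : r <= a * N X.
  have := hTa X; rewrite /X mulmxKV // /r -l1N opprB //.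
have Lp : 0 < L by lra.
have L2p : 0 < 2 * L by lra.
have c0' : 0 < 4 * L ^+ 2 / eps.
  have h := exprn_gt0 2 Lp; apply: divr_gt0 => //; exact: mulr_gt0.
have hl : 2 * L < lam * N X.
  have -> : lam * N X = (4 * L ^+ 2 / eps) * (a * N X) by rewrite /lam; ring.
  apply: lt_le_trans (_ : 2 * L < 4 * L ^+ 2 / eps * r) (ler_wpM2l (ltW c0') hX).
  rewrite ltr_pdivrMr // in hr.
  have -> : 4 * L ^+ 2 / eps * r = (2 * L) * ((r * (2 * L)) / eps).
    by field; rewrite lt0r_neq0.
  rewrite -[X in X < _]mulr1 ltr_pM2l //.
  by rewrite ltr_pdivlMr // mul1r.
have tv : t * N v <= L.
  apply: le_trans (_ : t * 1 <= L); last by rewrite mulr1.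
  by rewrite ler_wpM2l.
lra.
Qed.


Lemma haus : (hausdorff N theA (conv_hull theA) >= (L - eps)%:E)%E.
Proof.
rewrite /hausdorff le_max; apply/orP; right.
have h : (dist_set N (lam *: (c0 *m Ti)) theA <=
          ereal_sup [set dist_set N b theA | b in conv_hull theA])%E.
  by apply: ereal_sup_ubound; exists (lam *: (c0 *m Ti)) => //; exact: c0_hull.
apply: le_trans h; apply: le_ereal_inf_tmp => _ [w Aw <-].
rewrite lee_fin; exact: dist_lb.
Qed.

Lemma l1_distr (p : 'rV[R]_n) : distr p -> l1norm p = 1.
Proof.
move=> [p0 p1]; rewrite -p1; apply: eq_bigr => i _; rewrite ger0_norm //.
Qed.

Hypothesis hab : 1 <= a * b.

Lemma diam_le : (diam N theA <= (11 / eps * L ^+ 2 * (a * b))%:E)%E.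
Proof.
have L2 := L_ge2.
have e0 : 0 < eps by case/andP: heps.
have e3 : eps < 3 by case/andP: heps.
apply: ge_ereal_sup => _ [x [p1 [t1 [d1 h11 h12 ->]]] [y [p2 [t2 [d2 h21 h22 ->]]] <-]].
rewrite lee_fin.
have t10 : 0 <= t1 by apply: le_trans h11; exact: H2_ge0.
have t20 : 0 <= t2 by apply: le_trans h21; exact: H2_ge0.
have Nv0 : 0 <= N v by exact: N_ge0 hN v.
have -> : lam *: (p1 *m Ti) + t1 *: v - (lam *: (p2 *m Ti) + t2 *: v)
    = lam *: ((p1 - p2) *m Ti) + (t1 - t2) *: v.
  by rewrite mulmxBl scalerBr scalerBl opprD addrACA.
apply: le_trans (ND hN _ _) _.
rewrite !NZ //.
have Lp : 0 < L by lra.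
have lam0 : 0 < lam.
  have h := exprn_gt0 2 Lp; apply: divr_gt0 => //; apply: mulr_gt0 => //; exact: mulr_gt0.
rewrite gtr0_norm //.
have h1 : N ((p1 - p2) *m Ti) <= b * 2.
  apply: le_trans (hTb _) _; rewrite ler_pM2l //.
  by apply: le_trans (l1D _ _) _; rewrite l1N !l1_distr.
have h2 : `|t1 - t2| * N v <= L.
  apply: le_trans (_ : `|t1 - t2| * 1 <= L); first by rewrite ler_wpM2l.
  rewrite mulr1; rewrite ler_norml; apply/andP; split; lra.
have h3 : lam * N ((p1 - p2) *m Ti) <= lam * (b * 2) by rewrite ler_pM2l.
have -> : 11 / eps * L ^+ 2 * (a * b) = 2 * (lam * b) + 3 / eps * L ^+ 2 * (a * b).
  by rewrite /lam; field; rewrite lt0r_neq0.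
have h4 : L <= 3 / eps * L ^+ 2 * (a * b).
  have hL2 : L <= L ^+ 2 by rewrite expr2 ler_peMl //; lra.
  have h5 : 1 <= 3 / eps by rewrite ler_pdivlMr // mul1r; lra.
  have h6 : L ^+ 2 <= L ^+ 2 * (a * b) by rewrite ler_peMr // exprn_ge0 // ltW.
  have h7 : L ^+ 2 * (a * b) <= 3 / eps * (L ^+ 2 * (a * b)).
    by rewrite ler_peMl // mulr_ge0 // ?exprn_ge0 ?ltW // mulr_gt0.
  rewrite -mulrA; lra.
lra.
Qed.

End Construct.


Lemma psi0 (R : realType) n (T : 'M[R]_n) : psi T 0 = 0.
Proof. by rewrite -(scale0r 0) psiZ mul0r. Qed.

Lemma exists_A (R : realType) (n : nat) (N : 'rV[R]_n -> R) (hN : is_norm N)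
  (eps a b : R) (T : 'M[R]_n) :
  0 < eps < 3 -> (4 <= n)%N -> T \in unitmx -> 0 < a -> 0 < b ->
  (forall x, l1norm (x *m T) <= a * N x) ->
  (forall y, N (y *m invmx T) <= b * l1norm y) ->
  exists A : set 'rV[R]_n,
    [/\ approx_convex N A,
        (hausdorff N A (conv_hull A) >= (log2 n%:R - eps)%:E)%E &
        (diam N A <= (11 / eps * log2 (n%:R : R) ^+ 2 * (a * b))%:E)%E].
Proof.
move=> heps hn hT ha hb hTa hTb.
have n0 : (0 < n)%N by case: n hn {N hN T hT hTa hTb}.
pose i0 : 'I_n := Ordinal n0.
pose e0 : 'rV[R]_n := delta_mx ord0 i0.
pose u0 := e0 *m invmx T.
have psiu0 : psi T u0 = 1 by rewrite psi_Ti // (distr_delta R i0).2.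
have l1e0 : l1norm e0 = 1 by exact: l1_distr (distr_delta R i0).
have Nu0 : 0 < N u0.
  rewrite lt_neqAle N_ge0 // andbT; apply/eqP => /esym /(N_eq0 hN) h.
  have : l1norm (u0 *m T) = 0 by rewrite h mul0mx; exact: (N0 (@l1_norm R n)).
  by rewrite /u0 mulmxKV // l1e0 => /eqP; rewrite oner_eq0.
have hab : 1 <= a * b.
  have := hTa u0; rewrite /u0 mulmxKV // l1e0 => h1.
  have := hTb e0; rewrite l1e0 mulr1 -/u0 => h2.
  apply: le_trans h1 _; rewrite ler_pM2l //.
pose E := [set psi T x | x in [set x | N x <= 1]].
have hE : has_sup E.
  split; first by exists (psi T 0); exists 0 => //=; rewrite N0.
  exists a => _ [x /= Nx <-].
  apply: le_trans (psi_le T x) _; apply: le_trans (hTa x) _.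
  by rewrite ler_piMr // ltW.
pose S := sup E.
have hK : forall x, psi T x <= S * N x.
  move=> x; have [/(N_eq0 hN) ->|nx] := eqVneq (N x) 0.
    by rewrite psi0 N0 // mulr0.
  have nx0 : 0 < N x by rewrite lt_neqAle eq_sym nx N_ge0.
  have : psi T ((N x)^-1 *: x) <= S.
    apply: (sup_upper_bound hE); exists ((N x)^-1 *: x) => //=.
    by rewrite NZ // ger0_norm ?invr_ge0 ?(ltW nx0) // mulVf.
  by rewrite psiZ ler_pdivrMl // mulrC.
have S0 : 0 < S.
  apply: lt_le_trans (_ : 0 < psi T ((N u0)^-1 *: u0)) _.
    by rewrite psiZ psiu0 mulr1 invr_gt0.
  apply: (sup_upper_bound hE); exists ((N u0)^-1 *: u0) => //=.
  by rewrite NZ // ger0_norm ?invr_ge0 ?(ltW Nu0) // mulVf ?lt0r_neq0.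
have L2 := L_ge2 R hn.
have e0p : 0 < eps by case/andP: heps.
have [w [v /= Nv <-] hw] : exists2 w, E w & S - S * (eps / (2 * log2 (n%:R : R))) < w.
  apply: sup_adherent hE; rewrite mulr_gt0 // divr_gt0 //; lra.
have hv : S * (1 - eps / (2 * log2 (n%:R : R))) < psi T v by rewrite mulrBr mulr1.
exists (theA eps a T v); split.
- exact: approx.
- exact: (haus hN heps hn hT ha hTa S0 hK Nv hv).
- exact: (diam_le hN heps hn ha hb hTb Nv hab).
Qed.


Section Op.
Variables (R : realType) (n : nat) (N1 N2 : 'rV[R]_n -> R).
Hypotheses (h1 : is_norm N1) (h2 : is_norm N2).

Lemma opnorm_ge (T : 'M[R]_n) x : N1 x <= 1 -> ((N2 (x *m T))%:E <= opnorm N1 N2 T)%E.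
Proof. by move=> hx; apply: ereal_sup_ubound; exists x. Qed.

Lemma opnorm_le (T : 'M[R]_n) c : opnorm N1 N2 T = c%:E -> forall x, N2 (x *m T) <= c * N1 x.
Proof.
move=> hc x; have [/(N_eq0 h1) ->|nx] := eqVneq (N1 x) 0.
  by rewrite mul0mx !N0 // mulr0.
have nx0 : 0 < N1 x by rewrite lt_neqAle eq_sym nx N_ge0.
have := @opnorm_ge T ((N1 x)^-1 *: x).
rewrite hc lee_fin -scalemxAl NZ // ger0_norm ?invr_ge0 ?(ltW nx0) // mulrC.
rewrite -ler_pdivlMr ?invr_gt0 // invrK mulrC; apply.
by rewrite NZ // ger0_norm ?invr_ge0 ?(ltW nx0) // mulVf.
Qed.

Lemma N_sum_le (I : finType) (F : I -> 'rV[R]_n) :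
  N2 (\sum_i F i) <= \sum_i N2 (F i).
Proof.
apply: (big_ind2 (fun u w => N2 u <= w)); first by rewrite N0.
  by move=> u w u' w' hu hu'; apply: le_trans (ND h2 _ _) _; exact: lerD.
by [].
Qed.
End Op.

Lemma N_le_l1 (R : realType) n (N : 'rV[R]_n -> R) (hN : is_norm N) :
  exists b, 0 < b /\ forall y, N y <= b * l1norm y.
Proof.
pose K := \sum_i N (delta_mx ord0 i : 'rV[R]_n).
have K0 : 0 <= K by apply: sumr_ge0 => i _; exact: N_ge0.
exists (1 + K); split; first lra.
move=> y; rewrite {1}(row_sum_delta y).
apply: le_trans (N_sum_le hN _) _.
apply: le_trans (_ : \sum_i `|y 0 i| * K <= _).
  apply: ler_sum => i _; rewrite NZ // ler_wpM2l //.
  by rewrite /K (bigD1 i) //= lerDl; apply: sumr_ge0 => j _; exact: N_ge0.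
rewrite -mulr_suml mulrC ler_wpM2r ?l1_ge0 //; lra.
Qed.


Section Equiv.
Variables (R : realType) (n : nat) (N : 'rV[R]_n -> R).
Hypothesis hN : is_norm N.

Lemma entry_le (x : 'rV[R]_n) i : `|x ord0 i| <= `|x|.
Proof.
rewrite [leRHS]/Num.norm /= mx_normrE.
by apply/bigmax_geP; right => /=; exists (ord0, i).
Qed.

Lemma l1_le_mx (x : 'rV[R]_n) : l1norm x <= n%:R * `|x|.
Proof.
apply: le_trans (_ : \sum_(i < n) `|x| <= _); first by apply: ler_sum => i _; exact: entry_le.
by rewrite sumr_const card_ord mulr_natl.
Qed.

Lemma N_cont : continuous (N : 'rV[R]_n -> R).
Proof.
have [b [b0 hb]] := N_le_l1 hN.
have bn0 : 0 <= b * n%:R by rewrite mulr_ge0 // ltW.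
have K0 : 0 < b * n%:R + 1 by lra.
move=> x; apply/(@cvgrPdist_lt _ _ _ _ (nbhs_filter x)) => e e0.
have ep : 0 < e / (b * n%:R + 1) by rewrite divr_gt0.
have hn : \forall y \near x, `|x - y| < e / (b * n%:R + 1).
  exact: (@cvgr_dist_lt _ _ _ _ _ id x (@cvg_id _ (nbhs x)) _ ep).
near=> y.
have hy : `|x - y| < e / (b * n%:R + 1) by near: y.
have h1 : `|N x - N y| <= N (x - y).
  rewrite ler_norml; apply/andP; split.
    have := NBl hN y x; rewrite -(NN hN (y - x)) opprB; lra.
  exact: NBl.
have h2 : N (x - y) <= b * n%:R * `|x - y|.
  apply: le_trans (hb _) _; rewrite -mulrA; apply: ler_wpM2l; [exact: ltW | exact: l1_le_mx].
have h3 : b * n%:R * `|x - y| <= (b * n%:R + 1) * `|x - y|.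
  by rewrite ler_wpM2r // lerDl.
have h4 : (b * n%:R + 1) * `|x - y| < e.
  by rewrite mulrC -ltr_pdivlMr.
rewrite /= (le_lt_trans _ h4) //; apply: le_trans h1 _; apply: le_trans h2 h3.
Unshelve. all: by end_near.
Qed.

Lemma norm_equiv : (0 < n)%N -> exists c, 0 < c /\ forall x, l1norm x <= c * N x.
Proof.
move=> n0.
pose S := [set x : 'rV[R]_n | `|x| = 1].
have cS : compact S.
  apply: bounded_closed_compact.
    rewrite /= /bounded_near; near=> M => x /= ->.
    near: M; apply: nbhs_pinfty_ge; exact: num_real.
  have := proj1 (continuous_closedP _) (@norm_continuous _ 'rV[R]_n) [set x | x = 1%R] (@closed_eq _ 1).
  exact.
pose e0 : 'rV[R]_n := delta_mx ord0 (Ordinal n0).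
have e0n : e0 != 0.
  apply/eqP => /rowP /(_ (Ordinal n0)); rewrite !mxE !eqxx /= => /eqP.
  by rewrite oner_eq0.
have S0 : S !=set0.
  exists (`|e0|^-1 *: e0); rewrite /S /= normrZ normfV normr_id mulVf //.
  by rewrite normr_eq0.
have cN : {within S, continuous N} by apply: continuous_subspaceT; exact: N_cont.
have [c Sc hc] := EVT_min_rV S0 cS cN.
rewrite inE /S /= in Sc.
have Nc : 0 < N c.
  rewrite lt_neqAle N_ge0 // andbT; apply/eqP => /esym /(N_eq0 hN) c0.
  by move: Sc; rewrite c0 normr0 => /eqP; rewrite eq_sym oner_eq0.
exists (n%:R / N c); split; first by rewrite divr_gt0 // ltr0n.
move=> x; have [->|x0] := eqVneq x 0.
  by rewrite (N0 hN) mulr0 (N0 (@l1_norm R n)).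
have nx : 0 < `|x| by rewrite normr_gt0.
have : N c <= N (`|x|^-1 *: x).
  apply: hc; rewrite inE /S /= normrZ normfV normr_id mulVf //.
  by rewrite normr_eq0.
rewrite NZ // normfV normr_id => h.
apply: le_trans (l1_le_mx x) _.
rewrite mulrAC ler_pdivlMr // -mulrA ler_wpM2l ?ler0n //.
by rewrite -ler_pdivlMl.
Unshelve. all: by end_near.
Qed.

End Equiv.


Lemma opn_lb (R : realType) n (N : 'rV[R]_n -> R) (hN : is_norm N) (T : 'M[R]_n) (i0 : 'I_n) :
  T \in unitmx ->
  [/\ 0 < N (delta_mx ord0 i0 *m invmx T),
      (((N (delta_mx ord0 i0 *m invmx T))^-1)%:E <= opnorm N (@l1norm R n) T)%E &
      ((N (delta_mx ord0 i0 *m invmx T))%:E <= opnorm (@l1norm R n) N (invmx T))%E].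
Proof.
move=> hT.
set e0 : 'rV[R]_n := delta_mx ord0 i0.
set u := e0 *m invmx T.
have l1e0 : l1norm e0 = 1 by exact: l1_distr (distr_delta R i0).
have Nu : 0 < N u.
  rewrite lt_neqAle N_ge0 // andbT; apply/eqP => /esym /(N_eq0 hN) h.
  have : l1norm (u *m T) = 0 by rewrite h mul0mx; exact: (N0 (@l1_norm R n)).
  by rewrite /u mulmxKV // l1e0 => /eqP; rewrite oner_eq0.
split => //.
  have := @opnorm_ge R n N (@l1norm R n) T ((N u)^-1 *: u).
  rewrite -scalemxAl l1Z /u mulmxKV // l1e0 mulr1 ger0_norm ?invr_ge0 ?(ltW Nu) //.
  apply; rewrite NZ // ger0_norm ?invr_ge0 ?(ltW Nu) // mulVf //; exact: lt0r_neq0.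
have := @opnorm_ge R n (@l1norm R n) N (invmx T) e0.
by apply; rewrite l1e0.
Qed.


Unset Implicit Arguments. Set Strict Implicit.
Theorem theorem4p1 (R : realType) (eps : R) (heps : 0 < eps < 3) :
  exists n0 : nat, forall (n : nat), (n0 <= n)%N ->
  forall N : 'rV[R]_n -> R, is_norm N ->
  exists A : set 'rV[R]_n,
    [/\ approx_convex N A,
        (hausdorff N A (conv_hull A) >= (log2 n%:R - eps)%:E)%E &
        (diam N A <= (25 / eps * (log2 n%:R) ^+ 2)%:E * bm_dist_l1 N)%E].
Proof.
exists 4%N => n hn N hN.
have e0 : 0 < eps by case/andP: heps.
have n0 : (0 < n)%N by case: n hn {N hN}.
pose i0 : 'I_n := Ordinal n0.
have L2 := L_ge2 R hn.
have C0 : 0 < 25 / eps * (log2 (n%:R : R)) ^+ 2.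
  by rewrite mulr_gt0 ?divr_gt0 // exprn_gt0 //; lra.
have bm1 : (1%:E <= bm_dist_l1 N)%E.
  apply: le_ereal_inf_tmp => _ [T /= hT <-].
  have [Nu h1 h2] := opn_lb hN i0 hT.
  apply: le_trans (_ : (((N (delta_mx ord0 i0 *m invmx T))^-1)%:E *
                       (N (delta_mx ord0 i0 *m invmx T))%:E <= _)%E).
    by rewrite -EFinM mulVf ?lt0r_neq0.
  apply: lee_pmul => //; rewrite lee_fin ?invr_ge0 ltW //.
case Ed: (bm_dist_l1 N) bm1 => [d| |] // bm1.
- rewrite lee_fin in bm1.
  have dp : 0 < d by lra.
  have hd : bm_dist_l1 N \is a fin_num by rewrite Ed.
  have ep : 0 < d * (14 / 11) by rewrite mulr_gt0.
  have [x [T /= hT <-] hx] := lb_ereal_inf_adherent ep hd.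
  have hx' : (opnorm N (@l1norm R n) T * opnorm (@l1norm R n) N (invmx T)
     < bm_dist_l1 N + (d * (14 / 11))%:E)%E := hx.
  rewrite Ed in hx'; clear hx; rename hx' into hx.
  have [Nu h1 h2] := opn_lb hN i0 hT.
  set u := delta_mx ord0 i0 *m invmx T in Nu h1 h2.
  have Nu' : 0 < (N u)^-1 by rewrite invr_gt0.
  case E1: (opnorm N (@l1norm R n) T) h1 hx => [a| |] // h1 hx; last first.
    move: hx; rewrite gt0_mulye //; last by apply: lt_le_trans h2; rewrite lte_fin.
  case E2: (opnorm (@l1norm R n) N (invmx T)) h2 hx => [b| |] // h2 hx; last first.
    move: hx; rewrite gt0_muley //; last by apply: lt_le_trans h1; rewrite lte_fin.
  rewrite lee_fin in h1; rewrite lee_fin in h2.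
  have a0 : 0 < a by exact: lt_le_trans Nu' h1.
  have b0 : 0 < b by exact: lt_le_trans Nu h2.
  have hTa := opnorm_le hN (@l1_norm R n) E1.
  have hTb := opnorm_le (@l1_norm R n) hN E2.
  have [A [hA1 hA2 hA3]] := exists_A hN heps hn hT a0 b0 hTa hTb.
  exists A; split => //.
  apply: le_trans hA3 _.
  rewrite -EFinM lee_fin.
  rewrite -EFinM -EFinD lte_fin in hx.
  have hab : a * b <= d * 25 / 11 by lra.
  have K : 0 <= 11 / eps * log2 (n%:R : R) ^+ 2.
    by rewrite mulr_ge0 ?divr_ge0 ?exprn_ge0 //; lra.
  apply: le_trans (ler_wpM2l K hab) _.
  rewrite le_eqVlt; apply/orP; left; apply/eqP; field; exact: lt0r_neq0.
- have [c [c0 hc]] := norm_equiv hN n0.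
  have [b [b0 hb]] := N_le_l1 hN.
  have [A [hA1 hA2 hA3]] := exists_A hN (a := c) (b := b) (T := 1%:M) heps hn
    (unitmx1 _ _) c0 b0 (fun x => ltac:(by rewrite mulmx1)) (fun y => ltac:(by rewrite invmx1 mulmx1)).
  exists A; split => //.
  by rewrite gt0_muley ?lte_fin // leey.
Qed.
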